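(* Let $X$ be a Banach space and $\{Y_i\}_{i\in I}$ a family of closed subspaces of $X$ satisfying the $(\ast)$-condition, with $Sz(Y_i)\le\omega^\alpha$ for all $i\in I$ and some ordinal $\alpha$. If $\overline{\bigcup_{i\in I}Y_i}=X$, then $Sz(X)\le\omega^{\alpha+1}$.
   Context: A family $\{Y_i\}_{i\in I}$ of closed subspaces of $X$ satisfies the $(\ast)$-condition if there is a family $\{P_i\}_{i\in I}$ of linear projections on $X^\ast$ with $\ker P_i=Y_i^\perp$, $\|P_i\|\le1$, such that for every $\varepsilon>0$ there is $\delta(\varepsilon)>0$ with $\|\varphi-P_i\varphi\|<\varepsilon$ for all $i$ whenever $\|\varphi\|=1$ and $\|\varphi+P_i\varphi\|>2-\delta(\varepsilon)$. Szlenk index: for weak*-compact $K\subset X^\ast$, $s_\varepsilon(K)=\{x^\ast\in K:\ \text{every weak*-neighborhood } V\text{ of }x^\ast\text{ has }\mathrm{diam}(V\cap K)>\varepsilon\}$, iterated transfinitely with intersections at limits; $Sz_\varepsilon(K)=\min\{\alpha:s^\alpha_\varepsilon(K)=\emptyset\}$ or $\infty$; $Sz(K)=\sup_\varepsilon Sz_\varepsilon(K)$; $Sz(X)=Sz(B_{X^\ast})$. *)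

(* Defs.v *)
From HB Require Import structures.
From mathcomp Require Import all_boot all_order all_algebra.
From mathcomp Require Import all_classical all_reals all_analysis.
Set Implicit Arguments. Unset Strict Implicit. Unset Printing Implicit Defensive.
Import Order.TTheory GRing.Theory Num.Theory.
Import numFieldNormedType.Exports.
Local Open Scope classical_set_scope.
Local Open Scope ring_scope.

Section Banach.
Variables (R : realType) (X : normedModType R).

Definition lin_subspace (S : set X) : Prop :=
  S 0 /\ forall (a : R) (x y : X), S x -> S y -> S (a *: x + y).

(* Dual of a subspace S, represented as functions X -> R that vanish off S,
   are linear on S and bounded on S.  For S = setT this is X^*. *)
Definition dual (S : set X) : set (X -> R) :=
  (fun f : X -> R => (forall x, ~ S x -> f x = 0) /\
           (forall (a : R) x y, S x -> S y -> f (a *: x + y) = a * f x + f y) /\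
           (exists C : R, forall x, S x -> `|f x| <= C * `|x|)).

Definition dnorm (S : set X) (f : X -> R) : R :=
  sup (fun r : R => exists x, S x /\ `|x| <= 1 /\ r = `|f x|).

Definition dball (S : set X) : set (X -> R) :=
  (fun f : X -> R => dual S f /\ dnorm S f <= 1).

Definition annih (Y : set X) : set (X -> R) :=
  (fun f : X -> R => dual setT f /\ forall y, Y y -> f y = 0).

(* weak^*-neighbourhoods of phi in S^* (topology generated by evaluations at
   points of S) *)
Definition wstar_nbhd (S : set X) (phi : X -> R) (V : set (X -> R)) : Prop :=
  exists (xs : seq X) (d : R), 0 < d /\ (forall x, x \in xs -> S x) /\
    (fun f : X -> R => dual S f /\ forall x, x \in xs -> `|f x - phi x| < d) `<=` V.

Definition ddiam (S : set X) (A : set (X -> R)) : R :=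
  sup (fun r : R => exists f g, A f /\ A g /\ r = dnorm S (fun x => f x - g x)).

Definition szlenk_deriv (S : set X) (eps : R) (K : set (X -> R)) :
  set (X -> R) :=
  (fun phi : X -> R => K phi /\
     forall V, wstar_nbhd S phi V -> ddiam S (V `&` K) > eps).

(* Transfinite iteration indexed by a well-ordered type (T, lt): the element
   t : T stands for the ordinal of its initial segment; D t = s^t(K). *)
Definition is_pred (T : Type) (lt : T -> T -> Prop) (u t : T) : Prop :=
  lt u t /\ forall v, ~ (lt u v /\ lt v t).

Definition szlenk_iteration (S : set X) (eps : R) (K : set (X -> R))
    (T : Type) (lt : T -> T -> Prop) (D : T -> set (X -> R)) : Prop :=
  forall t,
    ((forall u, ~ lt u t) -> D t = K) /\
    (forall u, is_pred lt u t -> D t = szlenk_deriv S eps (D u)) /\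
    ((exists u, lt u t) -> (forall u, ~ is_pred lt u t) ->
       D t = \bigcap_(u in (fun u => lt u t)) D u).

(* s^beta(K) where beta = order type of (T, lt), given the iteration D *)
Definition szlenk_top (S : set X) (eps : R) (K : set (X -> R))
    (T : Type) (lt : T -> T -> Prop) (D : T -> set (X -> R)) (F : set (X -> R))
    : Prop :=
  ((forall t : T, False) -> F = K) /\
  (forall m, (forall u, u <> m -> lt u m) -> F = szlenk_deriv S eps (D m)) /\
  ((exists t : T, True) -> (forall m, exists u, ~ lt u m /\ u <> m) ->
     F = \bigcap_(t in setT) D t).

(* Sz_eps(K) <= beta, i.e. s^gamma_eps(K) is empty for some gamma <= beta *)
Definition Sz_eps_le (S : set X) (eps : R) (K : set (X -> R))
    (T : Type) (lt : T -> T -> Prop) : Prop :=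
  forall D F, szlenk_iteration S eps K lt D -> szlenk_top S eps K lt D F ->
    (exists t, D t = set0) \/ F = set0.

(* Sz(S) = sup_eps Sz_eps(B_{S^*}) <= beta *)
Definition Sz_le (S : set X) (T : Type) (lt : T -> T -> Prop) : Prop :=
  forall eps : R, 0 < eps -> Sz_eps_le S eps (dball S) lt.

Definition star_condition (I : Type) (Y : I -> set X) : Prop :=
  exists P : I -> (X -> R) -> (X -> R),
    (forall i f, dual setT f -> dual setT (P i f)) /\
    (forall i (a : R) f g, dual setT f -> dual setT g ->
        P i (fun x => a * f x + g x) = (fun x => a * P i f x + P i g x)) /\
    (forall i f, dual setT f -> P i (P i f) = P i f) /\
    (forall i f, dual setT f -> (P i f = (fun=> 0) <-> annih (Y i) f)) /\
    (forall i f, dual setT f -> dnorm setT (P i f) <= dnorm setT f) /\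
    (forall eps : R, 0 < eps -> exists delta : R, 0 < delta /\
       forall i f, dual setT f -> dnorm setT f = 1 ->
         dnorm setT (fun x => f x + P i f x) > 2 - delta ->
         dnorm setT (fun x => f x - P i f x) < eps).

End Banach.

(* Ordinals as well-ordered types. *)
Definition is_wellorder (A : Type) (lt : A -> A -> Prop) : Prop :=
  well_founded lt /\ (forall x y z, lt x y -> lt y z -> lt x z) /\
  (forall x y, x = y \/ lt x y \/ lt y x).

(* omega^alpha: finitely supported functions alpha -> nat, compared at the
   largest point where they differ (Cantor normal form order). *)
Definition omega_pow (A : Type) : Type :=
  {f : A -> nat | finite_set (fun a => f a <> 0%N)}.

Definition omega_pow_lt (A : Type) (lt : A -> A -> Prop)
    (f g : omega_pow A) : Prop :=
  exists a, (proj1_sig f a < proj1_sig g a)%N /\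
    forall b, lt a b -> proj1_sig f b = proj1_sig g b.

(* alpha + 1 *)
Definition succ_lt (A : Type) (lt : A -> A -> Prop) (x y : option A) : Prop :=
  match x, y with
  | Some a, Some b => lt a b
  | Some _, None => True
  | None, _ => False
  end.

(* Main.v *)
Require Import Defs.
From HB Require Import structures.
From mathcomp Require Import all_boot all_order all_algebra.
From mathcomp Require Import all_classical all_reals all_analysis.
From mathcomp Require Import ring lra.
Import Order.TTheory GRing.Theory Num.Theory.
Import numFieldNormedType.Exports.
Module S_Ord1.
Set Implicit Arguments. Unset Strict Implicit. Unset Printing Implicit Defensive.
Local Open Scope classical_set_scope.

Section Ord.
Variables (A : Type) (lt : A -> A -> Prop).
Hypothesis wo : is_wellorder lt.

Lemma wo_irr a : ~ lt a a.
Proof.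
case: wo => wf _; elim: (wf a) => x _ IH H; exact: (IH x H H).
Qed.

Lemma wo_trans a b c : lt a b -> lt b c -> lt a c.
Proof. by case: wo => _ [tr _]; apply: tr. Qed.

Lemma wo_tri a b : a = b \/ lt a b \/ lt b a.
Proof. by case: wo => _ [_ tr]; apply: tr. Qed.

Lemma wo_asym a b : lt a b -> lt b a -> False.
Proof. by move=> ab ba; apply: (@wo_irr a); apply: wo_trans ab ba. Qed.

Lemma fin_max (S : set A) : finite_set S -> S !=set0 ->
  exists m, S m /\ forall b, S b -> b = m \/ lt b m.
Proof.
move=> /(@finite_seqP {classic A}) [s ->].
elim: s => [[x]//|x s IH] _.
have [[y ys]|s0] := pselect ([set` s] !=set0).
  have [m [ms Hm]] := IH (ex_intro _ y ys).
  have [xm|[xm|mx]] := wo_tri x m.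
  - exists m; split; first by rewrite /= inE ms orbT.
    move=> b; rewrite /= inE => /orP[/eqP->|]; first by left.
    by move=> /Hm.
  - exists m; split; first by rewrite /= inE ms orbT.
    move=> b; rewrite /= inE => /orP[/eqP->|]; first by right.
    by move=> /Hm.
  - exists x; split; first by rewrite /= inE eqxx.
    move=> b; rewrite /= inE => /orP[/eqP->|]; first by left.
    move=> /Hm [->|bm]; right => //; exact: wo_trans bm mx.
exists x; split; first by rewrite /= inE eqxx.
move=> b; rewrite /= inE => /orP[/eqP->|bs]; first by left.
by exfalso; apply: s0; exists b.
Qed.

Notation OP := (omega_pow A).
Notation olt := (omega_pow_lt lt).

Lemma op_ext (f g : OP) : (forall a, sval f a = sval g a) -> f = g.
Proof.
case: f => f fP; case: g => g gP /= H.
have fg : f = g by apply: funext.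
subst g; congr exist; exact: Prop_irrelevance.
Qed.

Lemma olt_asym f g : olt f g -> olt g f -> False.
Proof.
move=> [a [fa Ha]] [b [gb Hb]].
have [ab|[ab|ba]] := wo_tri a b.
- subst b; move: (ltn_trans fa gb); by rewrite ltnn.
- by move: gb; rewrite (Ha _ ab) ltnn.
- by move: fa; rewrite (Hb _ ba) ltnn.
Qed.

Lemma olt_irr f : ~ olt f f.
Proof. by move=> H; apply: (olt_asym H H). Qed.

Lemma olt_trans f g h : olt f g -> olt g h -> olt f h.
Proof.
move=> [a [fa Ha]] [b [gb Hb]].
have [ab|[ab|ba]] := wo_tri a b.
- subst b; exists a; split; first exact: ltn_trans fa gb.
  by move=> c ac; rewrite Ha // Hb.
- exists b; split; first by rewrite Ha.
  by move=> c bc; rewrite Ha ?Hb //; apply: wo_trans ab bc.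
- exists a; split; first by rewrite -(Hb _ ba).
  by move=> c ac; rewrite Ha ?Hb //; apply: wo_trans ba ac.
Qed.

Lemma olt_tri f g : f = g \/ olt f g \/ olt g f.
Proof.
have [fg|nfg] := pselect (f = g); first by left.
right.
pose D := fun a => sval f a <> sval g a.
have Dfin : finite_set D.
  apply: (@sub_finite_set _ _ ((fun a => sval f a <> 0%N) `|` (fun a => sval g a <> 0%N))).
    move=> a Da; have [f0|f0] := pselect (sval f a = 0%N); last by left.
    by right => g0; apply: Da; rewrite f0 g0.
  rewrite finite_setU; split; [exact: (svalP f)|exact: (svalP g)].
have Dn0 : D !=set0.
  apply: contrapT => H; apply: nfg; apply: op_ext => a.
  by apply: contrapT => Ha; apply: H; exists a.
have [m [Dm Hm]] := fin_max Dfin Dn0.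
have eqab b : lt m b -> sval f b = sval g b.
  move=> mb; apply: contrapT => Db; have [bm|bm] := Hm b Db.
    by subst b; apply: (wo_irr mb).
  exact: (wo_asym mb bm).
have [lfg|lgf] : (sval f m < sval g m \/ sval g m < sval f m)%N.
  by move: Dm; rewrite /D; case: ltngtP => // _ _; [left|right].
- by left; exists m; split.
- by right; exists m; split => // b mb; rewrite eqab.
Qed.

Lemma finite_zero : finite_set (fun a : A => (fun _ : A => 0%N) a <> 0%N).
Proof. apply: (@sub_finite_set _ _ set0) => // a /=; by []. Qed.

Definition ozero : OP := exist _ (fun _ => 0%N) finite_zero.

Lemma olt_zero f : olt f ozero -> False.
Proof. by move=> [a [+ _]]. Qed.

Lemma olt_down (Z : set A) (f g : OP) :
  (forall b b', ~ Z b -> lt b b' -> ~ Z b') ->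
  (forall b, sval f b <> 0%N -> Z b) -> olt g f ->
  (forall b, sval g b <> 0%N -> Z b).
Proof.
move=> Zup Hf [c [gc Hc]] b gb; apply: contrapT => Zb.
have fc : sval f c <> 0%N by move=> fc0; rewrite fc0 in gc.
have Zc := Hf _ fc.
have [cb|[cb|bc]] := wo_tri c b.
- by subst.
- by apply: gb; rewrite Hc //; apply: contrapT => fb; apply: Zb; apply: Hf.
- exact: (Zup _ _ Zb bc Zc).
Qed.

Definition kill (f : OP) (m : A) : OP.
refine (exist _ (fun b => if pselect (b = m) then 0%N else sval f b) _).
apply: (sub_finite_set _ (svalP f)) => b /=.
by case: pselect.
Defined.

Lemma killE f m b : sval (kill f m) b = if pselect (b = m) then 0%N else sval f b.
Proof. by []. Qed.

Definition Pa (a : A) := forall f : OP, (forall b, sval f b <> 0%N -> lt b a) -> Acc olt f.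

Lemma La m : Pa m -> forall f : OP, (forall b, sval f b <> 0%N -> b = m \/ lt b m) -> Acc olt f.
Proof.
move=> Pm.
have Zup : forall b b', ~ (b = m \/ lt b m) -> lt b b' -> ~ (b' = m \/ lt b' m).
  move=> b b' Hb bb' [e|b'm].
    by subst b'; apply: Hb; right.
  by apply: Hb; right; apply: wo_trans bb' b'm.
suff H : forall k f, (forall b, sval f b <> 0%N -> b = m \/ lt b m) -> sval f m = k -> Acc olt f.
  by move=> f Hf; exact: (H _ f Hf erefl).
elim/ltn_ind => k IHk.
suff H : forall h : OP, Acc olt h -> (forall b, sval h b <> 0%N -> lt b m) ->
  forall f : OP, (forall b, sval f b <> 0%N -> b = m \/ lt b m) -> sval f m = k ->
  (forall b, b <> m -> sval f b = sval h b) -> Acc olt f.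
  move=> f Hf fm; apply: (H (kill f m)).
  - apply: Pm => b; rewrite killE; case: pselect => // bm fb.
    by case: (Hf _ fb).
  - by move=> b; rewrite killE; case: pselect => // bm fb; case: (Hf _ fb).
  - exact: Hf.
  - exact: fm.
  - by move=> b bm; rewrite killE; case: pselect.
move=> h; elim => {}h _ IHh Hh f Hf fm Hfh.
constructor => g gf.
have Hg := olt_down Zup Hf gf.
case: (gf) => c [gc Hc].
have fc : sval f c <> 0%N by move=> fc0; rewrite fc0 in gc.
have [cm|cm] := Hf _ fc.
  subst c; apply: (IHk (sval g m)) => //; by rewrite -fm.
have gm : sval g m = k by rewrite Hc.
apply: (IHh (kill g m)).
- exists c; split.
    rewrite killE; destruct (pselect (c = m)) as [e|ne]; first by subst c; case: (wo_irr cm).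
    by rewrite -Hfh //; move=> e; subst c; case: (wo_irr cm).
  move=> d cd; rewrite killE; destruct (pselect (d = m)) as [->|dm].
    by apply/esym; apply: contrapT => hm; have := Hh _ hm; apply: wo_irr.
  by rewrite -Hfh // Hc.
- by move=> b; rewrite killE; case: pselect => // bm gb; case: (Hg _ gb).
- exact: Hg.
- exact: gm.
- by move=> b bm; rewrite killE; case: pselect.
Qed.

Lemma op_zero_or_max (f : OP) : f = ozero \/
  exists m, sval f m <> 0%N /\ forall b, sval f b <> 0%N -> b = m \/ lt b m.
Proof.
have [[b fb]|] := pselect ((fun b => sval f b <> 0%N) !=set0).
  right; have [m [fm Hm]] := fin_max (svalP f) (ex_intro _ b fb).
  by exists m.
move=> H; left; apply: op_ext => a /=; apply: contrapT => fa.
by apply: H; exists a.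
Qed.

Lemma acc_zero : Acc olt ozero.
Proof. by constructor => g /olt_zero. Qed.

Lemma Pa_all a : Pa a.
Proof.
case: wo => wf _; elim: (wf a) => {}a _ IH f Hf.
have [->|[m [fm Hm]]] := op_zero_or_max f; first exact: acc_zero.
apply: (La (IH m (Hf _ fm))) => //.
Qed.

Lemma olt_wf : well_founded olt.
Proof.
move=> f; have [->|[m [fm Hm]]] := op_zero_or_max f; first exact: acc_zero.
exact: (@La m (@Pa_all m) f Hm).
Qed.

Lemma olt_wo : is_wellorder olt.
Proof.
split; first exact: olt_wf.
split; first exact: olt_trans.
exact: olt_tri.
Qed.

End Ord.

End S_Ord1.
Import S_Ord1.

Module S_Ord2.
Set Implicit Arguments. Unset Strict Implicit. Unset Printing Implicit Defensive.
Local Open Scope classical_set_scope.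

Section Ord2.
Variables (A : Type) (lt : A -> A -> Prop).
Hypothesis wo : is_wellorder lt.

Lemma succ_wo : is_wellorder (succ_lt lt).
Proof.
case: (wo) => wf [tr tri]; split; last split.
- have accS : forall a, Acc (succ_lt lt) (Some a).
    move=> a; induction (wf a) as [a _ IH]; constructor; intros [b|] H.
      exact: (IH b H).
    destruct H.
  move=> [a|]; first exact: accS.
  by constructor => -[b|] //= _; exact: accS.
- move=> [x|] [y|] [z|] //=; exact: tr.
- move=> [x|] [y|]; try by [right; left|right; right|left].
  have [->|[xy|yx]] := tri x y; by [left|right;left|right;right].
Qed.

Notation OP := (omega_pow A).
Notation OP' := (omega_pow (option A)).
Notation olt := (omega_pow_lt lt).
Notation olt' := (omega_pow_lt (succ_lt lt)).

Definition jfun (n : nat) (t : OP) : option A -> nat :=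
  fun o => match o with None => n | Some a => sval t a end.

Lemma jfin n t : finite_set (fun o => jfun n t o <> 0%N).
Proof.
apply: (@sub_finite_set _ _ ((Some @` (fun a => sval t a <> 0%N)) `|` [set None])).
  by move=> [a|] /= H; [left; exists a|right].
rewrite finite_setU; split; last exact: finite_set1.
apply: finite_image; exact: (svalP t).
Qed.

Definition jj n t : OP' := exist _ (jfun n t) (jfin n t).

Lemma pfin (v : OP') : finite_set (fun a => sval v (Some a) <> 0%N).
Proof.
have -> : (fun a => sval v (Some a) <> 0%N) = Some @^-1` (fun o => sval v o <> 0%N) by [].
apply: finite_preimage; last exact: (svalP v).
by move=> x y _ _ [].
Qed.

Definition pj (v : OP') : OP := exist _ (fun a => sval v (Some a)) (pfin v).

Lemma jj_pj v : v = jj (sval v None) (pj v).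
Proof. by apply: op_ext => -[a|]. Qed.

Lemma O1 n u t : olt' (jj n u) (jj n t) <-> olt u t.
Proof.
split.
  move=> [[a|] [H1 H2]] /=; last by rewrite ltnn in H1.
  exists a; split => // b ab; exact: (H2 (Some b)).
move=> [a [H1 H2]]; exists (Some a); split => // -[b|] //= ab; exact: H2.
Qed.

Lemma O2 (v w : OP') : (sval v None < sval w None)%N -> olt' v w.
Proof. by move=> H; exists None; split => // -[b|]. Qed.

Lemma O3 (v w : OP') : olt' v w -> (sval v None <= sval w None)%N.
Proof.
move=> [[a|] [H1 H2]]; last exact: ltnW.
by rewrite (H2 None).
Qed.

Lemma jzero_min v : ~ olt' v (jj 0 (ozero A)).
Proof. by move=> [[a|] [H _]]. Qed.

Lemma jz_below n t : ~ olt' t (jj n (ozero A)) \/ (n > 0)%N.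
Proof. by case: n => [|n]; [left; apply: jzero_min|right]. Qed.

Lemma TP n u t : is_pred olt u t -> is_pred olt' (jj n u) (jj n t).
Proof.
move=> [ut H]; split; first exact/O1.
move=> v [uv vt].
have e : sval v None = n.
  by apply/eqP; rewrite eqn_leq (O3 vt) (O3 uv).
rewrite (jj_pj v) e in uv vt.
by apply: (H (pj v)); split; apply/O1; [exact: uv|exact: vt].
Qed.

Lemma TL n t : (exists u, olt u t) -> (forall u, ~ is_pred olt u t) ->
  (exists v, olt' v (jj n t)) /\ (forall v, ~ is_pred olt' v (jj n t)).
Proof.
move=> [u ut] nop; split; first by exists (jj n u); apply/O1.
move=> p [pt H].
have := O3 pt; rewrite /= leq_eqVlt => /orP [/eqP e|lt_p].
  rewrite (jj_pj p) e in pt H.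
  apply: (nop (pj p)); split; first by move/O1: pt.
  move=> w [pw wt]; apply: (H (jj n w)); split; apply/O1; [exact: pw|exact: wt].
apply: (H (jj n u)); split; first by apply: O2.
exact/O1.
Qed.

Lemma TM n m : (forall u, u <> m -> olt u m) ->
  is_pred olt' (jj n m) (jj n.+1 (ozero A)).
Proof.
move=> Hm; split; first by apply: O2 => /=.
move=> v [mv vz].
have h1 := O3 mv; have h2 := O3 vz; rewrite /= in h1 h2.
have [e|e] : sval v None = n.+1 \/ sval v None = n.
  by move: h1 h2; rewrite leq_eqVlt => /orP[/eqP->|]; [right|move=> a b; left; apply/eqP; rewrite eqn_leq b a].
  rewrite (jj_pj v) e in vz.
  by move/O1: vz; apply: olt_zero.
rewrite (jj_pj v) e in mv; move/O1: mv => mv.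
have [e'|ne] := pselect (pj v = m).
  by rewrite e' in mv; apply: (olt_irr wo mv).
exact: (olt_asym wo mv (Hm _ ne)).
Qed.

Lemma TN n : (forall m : OP, exists u, ~ olt u m /\ u <> m) ->
  (exists v, olt' v (jj n.+1 (ozero A))) /\
  (forall v, ~ is_pred olt' v (jj n.+1 (ozero A))).
Proof.
move=> nomax; split; first by exists (jj n (ozero A)); apply: O2.
move=> p [pz H].
have h := O3 pz; rewrite /= in h.
move: h; rewrite leq_eqVlt => /orP[/eqP e|h].
  rewrite (jj_pj p) e in pz; move/O1: pz; exact: olt_zero.
have [u [nu ne]] := nomax (pj p).
have pu : olt (pj p) u.
  by have [e|[e|e]] := olt_tri wo (pj p) u; [case: ne; rewrite e| |case: nu].
apply: (H (jj n u)); split; last by apply: O2.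
move: h; rewrite ltnS leq_eqVlt => /orP[/eqP e|h].
  by rewrite (jj_pj p) e; apply/O1.
exact: O2.
Qed.

Lemma jj_lt_next n t : olt' (jj n t) (jj n.+1 (ozero A)).
Proof. exact: O2. Qed.

End Ord2.

End S_Ord2.
Import S_Ord2.

Module S_Iter.
Set Implicit Arguments. Unset Strict Implicit. Unset Printing Implicit Defensive.
Local Open Scope classical_set_scope.
Local Open Scope ring_scope.

Section Iter.
Variables (R : realType) (X : normedModType R).
Variables (S : set X) (eps : R) (K : set (X -> R)).
Variables (T : Type) (lt : T -> T -> Prop).
Hypothesis wo : is_wellorder lt.

Notation deriv := (szlenk_deriv S eps).

Lemma deriv_sub A : deriv A `<=` A.
Proof. by move=> f []. Qed.

Lemma min_exists (P : set T) : P !=set0 -> exists m, P m /\ forall v, lt v m -> ~ P v.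
Proof.
case: wo => wf _ [x Px].
elim: (wf x) Px => {}x _ IH Px.
have [[v [vx Pv]]|H] := pselect (exists v, lt v x /\ P v).
  exact: (IH v vx Pv).
by exists x; split => // v vx Pv; apply: H; exists v.
Qed.

Lemma pred_uniq u u' t : is_pred lt u t -> is_pred lt u' t -> u = u'.
Proof.
move=> [ut Hu] [u't Hu'].
have [//|[uu'|u'u]] := wo_tri wo u u'.
- by case: (Hu u'); split.
- by case: (Hu' u); split.
Qed.

Lemma iter_decr D : szlenk_iteration S eps K lt D ->
  forall t u, lt u t -> D t `<=` D u.
Proof.
move=> HD; case: (wo) => wf _.
move=> t; elim: (wf t) => {}t _ IH u ut.
have [[p pt]|nop] := pselect (exists p, is_pred lt p t).
  have [_ [H2 _]] := HD t; rewrite (H2 _ pt).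
  move=> f /deriv_sub Dp.
  have [e|[up|pu]] := wo_tri wo u p; first by subst u.
  - exact: IH (proj1 pt) _ up _ Dp.
  - by case: pt => _ /(_ u); case.
have [_ [_ H3]] := HD t.
rewrite H3; first by move=> f /(_ u ut).
- by exists u.
- by move=> p pt; apply: nop; exists p.
Qed.

Definition Phi (G : T -> set (X -> R)) (t : T) : set (X -> R) :=
  fun chi => K chi /\ (forall u, is_pred lt u t -> deriv (G u) chi) /\
    ((exists u, lt u t) -> (forall u, ~ is_pred lt u t) -> forall u, lt u t -> G u chi).

Definition gfpD (t : T) : set (X -> R) :=
  fun chi => exists G, (forall s, G s `<=` Phi G s) /\ G t chi.

Hypothesis mono : forall A B, A `<=` B -> B `<=` K -> deriv A `<=` deriv B.

Lemma Phi_mono G G' : (forall s, G s `<=` G' s) -> (forall s, G' s `<=` K) ->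
  forall t, Phi G t `<=` Phi G' t.
Proof.
move=> GG' G'K t chi [Kc [H2 H3]]; split => //; split.
  move=> u pu; apply: (mono (GG' u) (G'K u)); exact: H2.
move=> ex nop u ut; apply: GG'; exact: H3.
Qed.

Lemma gfpD_K t : gfpD t `<=` K.
Proof. by move=> chi [G [HG Gt]]; case: (HG _ _ Gt). Qed.

Lemma gfpD_sub t : gfpD t `<=` Phi gfpD t.
Proof.
move=> chi [G [HG Gt]].
have GD : forall s, G s `<=` gfpD s by move=> s f Gs; exists G.
have DK : forall s, gfpD s `<=` K by move=> s; apply: gfpD_K.
exact: (Phi_mono GD DK (HG _ _ Gt)).
Qed.

Lemma gfpD_fix t : gfpD t = Phi gfpD t.
Proof.
apply/seteqP; split; first exact: gfpD_sub.
move=> chi Pc; exists (Phi gfpD); split => //.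
move=> s; apply: Phi_mono; first exact: gfpD_sub.
by move=> s' f [].
Qed.

Lemma gfpD_coind G : (forall s, G s `<=` Phi G s) -> forall t, G t `<=` gfpD t.
Proof. by move=> HG t chi Gt; exists G. Qed.

Lemma gfpD_iter : szlenk_iteration S eps K lt gfpD.
Proof.
move=> t; split; last split.
- move=> min; rewrite gfpD_fix; apply/seteqP; split; first by move=> f [].
  move=> f Kf; split => //; split.
    by move=> u [ut _]; case: (min u).
  by move=> [u ut]; case: (min u).
- move=> u pu; rewrite gfpD_fix; apply/seteqP; split.
    by move=> f [_ [H2 _]]; apply: H2.
  move=> f df; split.
    by apply: gfpD_K; apply: deriv_sub df.
  split; first by move=> u' pu'; rewrite -(pred_uniq pu pu').
  by move=> _ /(_ u).
- move=> [u0 u0t] nop; rewrite gfpD_fix; apply/seteqP; split.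
    move=> f [_ [_ H3]] u ut; apply: H3 => //; by exists u0.
  move=> f Hf; split; first by apply: (@gfpD_K u0); apply: Hf.
  split; first by move=> u pu; case: (nop u).
  by move=> _ _ u ut; apply: Hf.
Qed.

Definition topF (D : T -> set (X -> R)) : set (X -> R) :=
  fun chi => (forall m, (forall u, u <> m -> lt u m) -> deriv (D m) chi) /\
    ((forall m, ~ (forall u, u <> m -> lt u m)) -> forall t, D t chi).

Lemma topF_top (t0 : T) D : szlenk_top S eps K lt D (topF D).
Proof.
split; last split.
- by move=> /(_ t0).
- move=> m Hm; apply/seteqP; split; first by move=> f [H1 _]; apply: H1.
  move=> f df; split.
    move=> m' Hm'; have [e|ne] := pselect (m' = m); first by subst m'.
    by case: (wo_asym wo (Hm _ ne) (Hm' _ (nesym ne))).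
  by move=> /(_ m).
- move=> _ nomax; apply/seteqP; split.
    by move=> f [_ H2] t _; apply: H2 => m Hm; have [u [nu ne]] := nomax m; apply: nu; apply: Hm.
  move=> f Hf; split.
    by move=> m Hm; have [u [nu ne]] := nomax m; case: nu; apply: Hm.
  by move=> _ t; apply: Hf.
Qed.

End Iter.

End S_Iter.
Import S_Iter.

Module S_Ana.
Set Implicit Arguments. Unset Strict Implicit. Unset Printing Implicit Defensive.
Local Open Scope classical_set_scope.
Local Open Scope ring_scope.

Section Ana.
Variables (R : realType) (X : normedModType R).
Implicit Types (S : set X) (f g : X -> R).

Lemma dual_f0 S f : S 0 -> dual S f -> f 0 = 0.
Proof.
move=> S0 [_ [lin _]]; have := lin 1 0 0 S0 S0.
rewrite scaler0 addr0 mul1r => H.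
by apply: (@addrI _ (f 0)); rewrite -H addr0.
Qed.

Definition dset S f := [set r : R | exists x, S x /\ `|x| <= 1 /\ r = `|f x|].

Lemma dset_n0 S f : S 0 -> dset S f !=set0.
Proof. by move=> S0; exists `|f 0|; exists 0; rewrite normr0. Qed.

Lemma dual_bound S f : dual S f -> exists M, forall x, S x -> `|x| <= 1 -> `|f x| <= M.
Proof.
move=> [_ [_ [C HC]]]; exists `|C| => x Sx x1.
apply: (le_trans (HC x Sx)); apply: (le_trans (ler_norm _)).
rewrite normrM (normr_id x); rewrite -[leRHS]mulr1; apply: ler_wpM2l => //.
Qed.

Lemma dnorm_has_sup S f : S 0 -> dual S f -> has_sup (dset S f).
Proof.
move=> S0 df; split; first exact: dset_n0.
have [M HM] := dual_bound df; exists M => r [x [Sx [x1 ->]]]; exact: HM.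
Qed.

Lemma dnorm_ge S f x : S 0 -> dual S f -> S x -> `|x| <= 1 -> `|f x| <= dnorm S f.
Proof.
move=> S0 df Sx x1; apply: (ub_le_sup); first by case: (dnorm_has_sup S0 df).
by exists x.
Qed.

Lemma dnorm_le S f M : S 0 -> (forall x, S x -> `|x| <= 1 -> `|f x| <= M) -> dnorm S f <= M.
Proof.
move=> S0 H; apply: ge_sup; first exact: dset_n0.
by move=> r [x [Sx [x1 ->]]]; apply: H.
Qed.

Lemma dnorm_ge0 S f : S 0 -> dual S f -> 0 <= dnorm S f.
Proof.
move=> S0 df; apply: le_trans (dnorm_ge S0 df S0 _) => //; by rewrite normr0.
Qed.

Lemma dnorm_gt S f r : S 0 -> r < dnorm S f -> exists x, S x /\ `|x| <= 1 /\ r < `|f x|.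
Proof.
move=> S0 H; have [y [x [Sx [x1 ->]]] ry] := sup_gt (dset_n0 f S0) H.
by exists x.
Qed.

Lemma dual_scalar S f a x : S 0 -> dual S f -> S x -> S (a *: x) /\ f (a *: x) = a * f x.
Proof.
move=> S0 df Sx; have [_ [lin _]] := df.
split.
Abort.

Lemma lin_scale S a x : lin_subspace S -> S x -> S (a *: x).
Proof. by move=> [S0 H] Sx; have := H a x 0 Sx S0; rewrite addr0. Qed.

Lemma dual_scale_pt S f a x : lin_subspace S -> dual S f -> S x -> f (a *: x) = a * f x.
Proof.
move=> [S0 HS] df Sx; have [_ [lin _]] := df.
by have := lin a x 0 Sx S0; rewrite addr0 (dual_f0 S0 df) addr0.
Qed.

Lemma dnorm_mul S f x : lin_subspace S -> dual S f -> S x -> `|f x| <= dnorm S f * `|x|.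
Proof.
move=> lS df Sx; have S0 := proj1 lS.
have [x0|xn0] := eqVneq x 0.
  by rewrite x0 (dual_f0 S0 df) !normr0 mulr0.
have nx : 0 < `|x| by rewrite normr_gt0.
have Sy := lin_scale (`|x|^-1) lS Sx.
have := dnorm_ge S0 df Sy.
rewrite normrZ normrV ?unitfE ?gt_eqF // normr_id mulVf ?gt_eqF // => /(_ (lexx _)).
rewrite (dual_scale_pt _ lS df Sx) normrM normrV ?unitfE ?gt_eqF // normr_id.
by rewrite ler_pdivrMl // mulrC.
Qed.

Lemma dual_lc S f g a : lin_subspace S -> dual S f -> dual S g ->
  dual S (fun x => a * f x + g x).
Proof.
move=> lS [f0 [fl [Cf HCf]]] [g0 [gl [Cg HCg]]]; split; last split.
- by move=> x nSx; rewrite f0 // g0 // mulr0 addr0.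
- move=> b x y Sx Sy; rewrite fl // gl //.
  ring.
- exists (`|a| * `|Cf| + `|Cg|) => x Sx.
  rewrite mulrDl; apply: (le_trans (ler_normD _ _)); apply: lerD.
    rewrite normrM -mulrA; apply: ler_wpM2l => //.
    apply: (le_trans (HCf _ Sx)); apply: ler_wpM2r => //; exact: ler_norm.
  apply: (le_trans (HCg _ Sx)); apply: ler_wpM2r => //; exact: ler_norm.
Qed.

Lemma dual0 S : dual S (fun=> 0).
Proof.
split; first by [].
split; first by move=> a x y _ _; rewrite mulr0 addr0.
by exists 0 => x _; rewrite normr0 mul0r.
Qed.

Lemma dual_scale S f a : lin_subspace S -> dual S f -> dual S (fun x => a * f x).
Proof.
move=> lS df; have := dual_lc a lS df (dual0 S).
by rewrite (_ : (fun x => a * f x + 0) = (fun x => a * f x)) //; apply: funext => x; rewrite addr0.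
Qed.

Lemma dual_sub S f g : lin_subspace S -> dual S f -> dual S g -> dual S (fun x => f x - g x).
Proof.
move=> lS df dg; have := dual_lc (-1) lS dg df.
rewrite (_ : (fun x => -1 * g x + f x) = (fun x => f x - g x)) //.
by apply: funext => x; rewrite mulN1r addrC.
Qed.

Lemma dual_add S f g : lin_subspace S -> dual S f -> dual S g -> dual S (fun x => f x + g x).
Proof.
move=> lS df dg; have := dual_lc 1 lS df dg.
rewrite (_ : (fun x => 1 * f x + g x) = (fun x => f x + g x)) //.
by apply: funext => x; rewrite mul1r.
Qed.

Lemma dnorm_scale_le S f a : S 0 -> dual S f -> dnorm S (fun x => a * f x) <= `|a| * dnorm S f.
Proof.
move=> S0 df; apply: dnorm_le => // x Sx x1; rewrite normrM; apply: ler_wpM2l => //.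
exact: dnorm_ge.
Qed.

Lemma dnorm_scale S f a : lin_subspace S -> dual S f -> dnorm S (fun x => a * f x) = `|a| * dnorm S f.
Proof.
move=> lS df; have S0 := proj1 lS.
apply/eqP; rewrite eq_le; apply/andP; split; first exact: dnorm_scale_le.
have [a0|an0] := eqVneq a 0.
  rewrite a0 normr0 mul0r; apply: dnorm_ge0 => //; exact: dual_scale.
have na : 0 < `|a| by rewrite normr_gt0.
have e : f = (fun x => a^-1 * (a * f x)).
  by apply: funext => x; rewrite mulrA mulVf // mul1r.
have H : dnorm S f <= `|a|^-1 * dnorm S (fun x => a * f x).
  rewrite {1}e; apply: le_trans (dnorm_scale_le _ S0 (dual_scale a lS df)) _.
  by rewrite normrV ?unitfE.
by rewrite -(ler_pM2l na) mulrA mulfV ?gt_eqF // mul1r in H.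
Qed.

Lemma dnorm_sub_le S f g : S 0 -> dual S f -> dual S g ->
  dnorm S (fun x => f x - g x) <= dnorm S f + dnorm S g.
Proof.
move=> S0 df dg; apply: dnorm_le => // x Sx x1.
apply: le_trans (ler_normB _ _) _; apply: lerD; exact: dnorm_ge.
Qed.

Lemma dnorm_add_le S f g : S 0 -> dual S f -> dual S g ->
  dnorm S (fun x => f x + g x) <= dnorm S f + dnorm S g.
Proof.
move=> S0 df dg; apply: dnorm_le => // x Sx x1.
apply: le_trans (ler_normD _ _) _; apply: lerD; exact: dnorm_ge.
Qed.

Lemma ddiam_gt S (A : set (X -> R)) M e : S 0 -> (forall f, A f -> dual S f /\ dnorm S f <= M) ->
  0 <= e -> (e < ddiam S A <-> exists f g, A f /\ A g /\ e < dnorm S (fun x => f x - g x)).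
Proof.
move=> S0 HA e0; split.
  move=> H.
  have [[r [f [g [Af [Ag _]]]]]|n0] := pselect ((fun r : R => exists f g, A f /\ A g /\ r = dnorm S (fun x => f x - g x)) !=set0).
    have [y [f' [g' [Af' [Ag' ->]]]] ey] := sup_gt (ex_intro _ _ (ex_intro _ f (ex_intro _ g (conj Af (conj Ag erefl))))) H.
    by exists f', g'.
  exfalso; move: H; rewrite /ddiam.
  have -> : (fun r : R => exists f g, A f /\ A g /\ r = dnorm S (fun x => f x - g x)) = set0.
    by apply/seteqP; split => // r Hr; apply: n0; exists r.
  by rewrite sup0 ltNge e0.
move=> [f [g [Af [Ag H]]]]; apply: lt_le_trans H _.
apply: ub_le_sup; last by exists f, g.
exists (M + M) => r [f' [g' [Af' [Ag' ->]]]].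
have [df Mf] := HA _ Af'; have [dg Mg] := HA _ Ag'.
apply: le_trans (dnorm_sub_le S0 df dg) _; exact: lerD.
Qed.

Definition bnd S M (K : set (X -> R)) := forall f, K f -> dual S f /\ dnorm S f <= M.

Lemma deriv_mono S eps M (K A B : set (X -> R)) : S 0 -> 0 <= eps -> bnd S M K ->
  A `<=` B -> B `<=` K -> szlenk_deriv S eps A `<=` szlenk_deriv S eps B.
Proof.
move=> S0 e0 bK AB BK f [Af H]; split; first exact: AB.
move=> V HV; have := H V HV.
have bA : bnd S M (V `&` A) by move=> g [_ /AB /BK]; apply: bK.
have bB : bnd S M (V `&` B) by move=> g [_ /BK]; apply: bK.
rewrite (ddiam_gt S0 bA e0) (ddiam_gt S0 bB e0).
move=> [g [h [[Vg Ag] [[Vh Ah] gh]]]]; exists g, h; split; first by split => //; apply: AB.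
by split => //; split => //; apply: AB.
Qed.

Definition restr (Y : set X) f : X -> R := fun x => if `[< Y x >] then f x else 0.

Lemma restrE (Y : set X) f x : Y x -> restr Y f x = f x.
Proof. by move=> Yx; rewrite /restr asboolT. Qed.

Lemma restrN (Y : set X) f x : ~ Y x -> restr Y f x = 0.
Proof. by move=> Yx; rewrite /restr asboolF. Qed.

Lemma dual_restr (Y : set X) f : lin_subspace Y -> dual setT f -> dual Y (restr Y f).
Proof.
move=> [Y0 lY] [_ [fl [C HC]]]; split; last split.
- by move=> x nY; rewrite restrN.
- move=> a x y Yx Yy; rewrite !restrE //; last exact: lY.
  by have := fl a x y I I.
- by exists C => x Yx; rewrite restrE //; apply: HC.
Qed.

Lemma dnorm_restr (Y : set X) f : lin_subspace Y -> dual setT f ->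
  dnorm Y (restr Y f) <= dnorm setT f.
Proof.
move=> [Y0 lY] df; apply: dnorm_le => // x Yx x1; rewrite restrE //.
exact: dnorm_ge.
Qed.

End Ana.

End S_Ana.
Import S_Ana.

Module S_HB.
Set Implicit Arguments. Unset Strict Implicit. Unset Printing Implicit Defensive.
Local Open Scope classical_set_scope.
Local Open Scope ring_scope.

Section HBan.
Variables (R : realType) (X : normedModType R).
Implicit Types (Z : set X) (h : X -> R) (a : R) (x y : X).

Definition linZ (Z : set X) (h : X -> R) :=
  forall (a : R) x y, Z x -> Z y -> h (a *: x + y) = a * h x + h y.

Lemma linZ0 Z h : Z 0 -> linZ Z h -> h 0 = 0.
Proof.
move=> Z0 lh; have := lh 1 0 0 Z0 Z0; rewrite scaler0 addr0 mul1r => H.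
by apply: (@addrI _ (h 0)); rewrite -H addr0.
Qed.

Lemma linZZ Z h a x : lin_subspace Z -> linZ Z h -> Z x -> h (a *: x) = a * h x.
Proof.
move=> [Z0 lZ] lh Zx; have := lh a x 0 Zx Z0.
by rewrite addr0 (linZ0 Z0 lh) addr0.
Qed.

Lemma linS Z a x : lin_subspace Z -> Z x -> Z (a *: x).
Proof. by move=> [Z0 lZ] Zx; have := lZ a x 0 Zx Z0; rewrite addr0. Qed.

Lemma linD Z x y : lin_subspace Z -> Z x -> Z y -> Z (x + y).
Proof. by move=> [Z0 lZ] Zx Zy; have := lZ 1 x y Zx Zy; rewrite scale1r. Qed.

Lemma linhD Z h x y : lin_subspace Z -> linZ Z h -> Z x -> Z y -> h (x + y) = h x + h y.
Proof. by move=> lZ lh Zx Zy; have := lh 1 x y Zx Zy; rewrite scale1r mul1r. Qed.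

Variables (Y : set X) (g : X -> R) (M : R).
Hypothesis lY : lin_subspace Y.
Hypothesis M0 : 0 <= M.
Hypothesis lg : linZ Y g.
Hypothesis bg : forall y, Y y -> `|g y| <= M * `|y|.

Definition goodp (p : set X * (X -> R)) :=
  [/\ lin_subspace p.1, Y `<=` p.1, linZ p.1 p.2, (forall y, Y y -> p.2 y = g y) &
    (forall z, p.1 z -> `|p.2 z| <= M * `|z|)].

Definition PT := {p : set X * (X -> R) | goodp p}.

Definition Rr (s t : PT) : bool :=
  `[< (sval s).1 `<=` (sval t).1 /\ forall z, (sval s).1 z -> (sval s).2 z = (sval t).2 z >].

Lemma good0 : goodp (Y, g).
Proof. by split. Qed.

Definition t0 : PT := exist _ (Y, g) good0.

Section Chain.
Variable (A : set PT).
Hypothesis tot : total_on A Rr.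
Hypothesis An0 : A !=set0.

Definition cZ : set X := fun x => exists s, A s /\ (sval s).1 x.

Definition ch (x : X) : R :=
  match pselect (exists s, A s /\ (sval s).1 x) with
  | left H => (sval (sval (cid H))).2 x
  | right _ => 0 end.

Lemma chE s x : A s -> (sval s).1 x -> ch x = (sval s).2 x.
Proof.
move=> As Zx; rewrite /ch; case: pselect => [H|H]; last by case: H; exists s.
case: (cid H) => s0 /= [As0 Z0x].
have [/asboolP [_ E]|/asboolP [_ E]] := tot As As0; last by rewrite E.
by rewrite -E.
Qed.

Lemma chain_common s s' x y : A s -> A s' -> (sval s).1 x -> (sval s').1 y ->
  exists s'', A s'' /\ (sval s'').1 x /\ (sval s'').1 y.
Proof.
move=> As As' Zx Zy; have [/asboolP [E _]|/asboolP [E _]] := tot As As'.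
  by exists s'; split => //; split => //; apply: E.
by exists s; split => //; split => //; apply: E.
Qed.

Lemma chain_good : goodp (cZ, ch).
Proof.
case: An0 => s0 As0; case: (svalP s0) => [[Z0 _] YZ _ _ _].
split.
- split; first by exists s0.
  move=> a x y [s [As Zx]] [s' [As' Zy]].
  have [s'' [As'' [Zx' Zy']]] := chain_common As As' Zx Zy.
  exists s''; split => //; case: (svalP s'') => [[_ l] _ _ _ _]; exact: l.
- by move=> y Yy; exists s0; split => //; apply: YZ.
- move=> a x y [s [As Zx]] [s' [As' Zy]].
  have [s'' [As'' [Zx' Zy']]] := chain_common As As' Zx Zy.
  case: (svalP s'') => [[_ l] _ lh _ _].
  by rewrite /= !(chE As'') //; [apply: lh|apply: l].
- move=> y Yy /=; rewrite (chE As0); last by apply: YZ.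
  by case: (svalP s0) => _ _ _ E _; apply: E.
- move=> z [s [As Zz]] /=; rewrite (chE As Zz); case: (svalP s) => _ _ _ _; apply.
  exact: Zz.
Qed.

End Chain.

Lemma chains_bounded (A : set PT) : total_on A Rr -> exists t, forall s, A s -> Rr s t.
Proof.
move=> tot; have [An0|A0] := pselect (A !=set0); last first.
  by exists t0 => s As; case: A0; exists s.
exists (exist _ (cZ A, ch A) (chain_good tot An0)) => s As; apply/asboolP; split => /=.
  by move=> z Zz; exists s.
by move=> z Zz; rewrite (chE tot As Zz).
Qed.

Section Ext.
Variables (Z : set X) (h : X -> R) (z : X).
Hypothesis gp : goodp (Z, h).
Hypothesis nz : ~ Z z.

Let lZ : lin_subspace Z. Proof. by case: gp. Qed.
Let lh : linZ Z h. Proof. by case: gp. Qed.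
Let bh : forall w, Z w -> `|h w| <= M * `|w|. Proof. by case: gp. Qed.
Let Z0 : Z 0. Proof. by case: lZ. Qed.
Let h0 : h 0 = 0. Proof. exact: linZ0 Z0 lh. Qed.

Definition Ec := [set r : R | exists w, Z w /\ r = h w - M * `|w - z|].
Definition cc := sup Ec.

Lemma hadd_le w w' : Z w -> Z w' -> h w + h w' <= M * `|w - z| + M * `|w' + z|.
Proof.
move=> Zw Zw'; rewrite -(linhD lZ lh Zw Zw') -mulrDr.
apply: le_trans (ler_norm _) _; apply: le_trans (bh (linD lZ Zw Zw')) _; apply: ler_wpM2l => //.
have -> : w + w' = (w - z) + (w' + z) by rewrite addrACA addNr addr0.
exact: ler_normD.
Qed.

Lemma Ec_sup : has_sup Ec.
Proof.
split; first by exists (h 0 - M * `|0 - z|); exists 0.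
exists (M * `|0 + z| - h 0) => r [w [Zw ->]].
have := hadd_le Zw Z0; lra.
Qed.

Lemma c1 w : Z w -> h w - M * `|w - z| <= cc.
Proof. by move=> Zw; apply: ub_le_sup; [case: Ec_sup|exists w]. Qed.

Lemma c2 w' : Z w' -> cc <= M * `|w' + z| - h w'.
Proof.
move=> Zw'; apply: ge_sup; first by case: Ec_sup.
move=> r [w [Zw ->]]; have := hadd_le Zw Zw'; lra.
Qed.

Lemma c1' w l : Z w -> 0 < l -> h w - M * `|w - l *: z| <= l * cc.
Proof.
move=> Zw l0; have Zw' := linS (l^-1) lZ Zw.
have := c1 Zw'; rewrite (linZZ _ lZ lh Zw).
have -> : l^-1 *: w - z = l^-1 *: (w - l *: z).
  by rewrite scalerBr scalerA mulVf ?gt_eqF // scale1r.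
rewrite normrZ gtr0_norm ?invr_gt0 // => H.
set b := `|w - l *: z| in H *.
have E : h w - M * b = l * (l^-1 * h w - M * (l^-1 * b)).
  by field; rewrite gt_eqF.
by rewrite E; apply: ler_wpM2l => //; apply: ltW.
Qed.

Lemma c2' w l : Z w -> 0 < l -> l * cc <= M * `|w + l *: z| - h w.
Proof.
move=> Zw l0; have Zw' := linS (l^-1) lZ Zw.
have := c2 Zw'; rewrite (linZZ _ lZ lh Zw).
have -> : l^-1 *: w + z = l^-1 *: (w + l *: z).
  by rewrite scalerDr scalerA mulVf ?gt_eqF // scale1r.
rewrite normrZ gtr0_norm ?invr_gt0 // => H.
set b := `|w + l *: z| in H *.
have E : M * b - h w = l * (M * (l^-1 * b) - l^-1 * h w).
  by field; rewrite gt_eqF.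
by rewrite E; apply: ler_wpM2l => //; apply: ltW.
Qed.

Definition eZ : set X := fun x => exists w t, Z w /\ x = w + t *: z.

Lemma rep_uniq w t w' t' : Z w -> Z w' -> w + t *: z = w' + t' *: z -> w = w' /\ t = t'.
Proof.
move=> Zw Zw' E.
have [tt|ntt] := eqVneq t t'.
  by subst t'; split => //; move/addIr: E.
exfalso; apply: nz.
have -> : z = (t - t')^-1 *: (w' - w).
  apply: (@scalerI _ _ (t - t')); first by rewrite subr_eq0.
  rewrite scalerA mulfV ?subr_eq0 // scale1r scalerBl.
  apply: (@addIr _ (w + t' *: z)).
  by rewrite addrCA subrK addrA subrK.
apply: linS lZ _.
have := linD lZ Zw' (linS (-1) lZ Zw); by rewrite scaleN1r.
Qed.

Definition eh (x : X) : R :=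
  match pselect (exists p : X * R, Z p.1 /\ x = p.1 + p.2 *: z) with
  | left H => let p := sval (cid H) in h p.1 + p.2 * cc
  | right _ => 0 end.

Lemma ehE w t : Z w -> eh (w + t *: z) = h w + t * cc.
Proof.
move=> Zw; rewrite /eh; case: pselect => [H|H]; last by case: H; exists (w, t).
case: (cid H) => [[w' t']] /= [Zw' E].
by have [-> ->] := rep_uniq Zw Zw' E.
Qed.

Lemma ext_good : goodp (eZ, eh).
Proof.
split => /=.
- split; first by exists 0, 0; rewrite scale0r addr0.
  move=> a x y [w [t [Zw ->]]] [w' [t' [Zw' ->]]].
  exists (a *: w + w'), (a * t + t'); split; first by case: lZ => _; apply.
  by rewrite scalerDr scalerA scalerDl addrACA.
- move=> y Yy; exists y, 0; split; first by case: gp => _ YZ _ _ _; apply: YZ.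
  by rewrite scale0r addr0.
- move=> a x y [w [t [Zw ->]]] [w' [t' [Zw' ->]]].
  have -> : a *: (w + t *: z) + (w' + t' *: z) = (a *: w + w') + (a * t + t') *: z.
    by rewrite scalerDr scalerA scalerDl addrACA.
  rewrite !ehE //; last by case: lZ => _; apply.
  rewrite lh //; ring.
- move=> y Yy; have Zy : Z y by case: gp => _ YZ _ _ _; apply: YZ.
  have := ehE 0 Zy; rewrite scale0r addr0 mul0r addr0 => ->.
  by case: gp => _ _ _ E _; apply: E.
- move=> x [w [t [Zw ->]]]; rewrite ehE //.
  have [t0|tn0] := eqVneq t 0.
    by rewrite t0 scale0r addr0 mul0r addr0; apply: bh.
  have Zmw : Z (- w) by have := linS (-1) lZ Zw; rewrite scaleN1r.
  have hmw : h (- w) = - h w by rewrite -scaleN1r (linZZ _ lZ lh Zw) mulN1r.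
  rewrite ler_norml; case: (ltgtP t 0) => [tlt|tgt|]; last by move/eqP: tn0.
  + have l0 : 0 < - t by rewrite oppr_gt0.
    have e1 : w - (- t) *: z = w + t *: z by rewrite scaleNr opprK.
    have e2 : - w + (- t) *: z = - (w + t *: z) by rewrite scaleNr opprD.
    have := c1' Zw l0; rewrite e1 => H1.
    have := c2' Zmw l0; rewrite e2 normrN hmw => H2.
    apply/andP; split; lra.
  + have e2 : - w - t *: z = - (w + t *: z) by rewrite opprD.
    have := c2' Zw tgt => H1.
    have := c1' Zmw tgt; rewrite e2 normrN hmw => H2.
    apply/andP; split; lra.
Qed.

End Ext.

Theorem hahn_banach : exists w : X -> R, linZ setT w /\ (forall y, Y y -> w y = g y) /\
  (forall x, `|w x| <= M * `|x|).
Proof.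
have [t Ht] : exists t : PT, premaximal (fun s u : PT => Rr s u) t.
  apply: (@ZL_preorder PT t0 Rr).
- by move=> s; apply/asboolP; split.
- move=> r s u /asboolP [E1 F1] /asboolP [E2 F2]; apply/asboolP; split.
    by move=> x /E1 /E2.
  by move=> x Zx; rewrite F1 // F2 //; apply: E1.
- exact: chains_bounded.
case: t Ht => [[Z h] gp] Ht.
have ZT : forall x, Z x.
  move=> z; apply: contrapT => nz.
  pose s := (exist _ (eZ Z z, eh Z h z) (ext_good gp nz)) : PT.
  have Rts : Rr (exist _ (Z, h) gp) s.
    apply/asboolP; split => /=; first by move=> x Zx; exists x, 0; rewrite scale0r addr0.
    move=> x Zx; have := ehE gp nz 0 Zx; rewrite scale0r addr0 mul0r addr0 => ->.
    done.
  have /asboolP [E _] := Ht _ Rts.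
  by apply nz; apply E; exists 0, 1; rewrite scale1r add0r; split => //; case: (gp) => [[]].
case: (gp) => /= lZ YZ lh gE bh.
exists h; split; first by move=> a x y _ _; apply: lh.
by split => // x; apply: bh; apply: ZT.
Qed.

End HBan.

End S_HB.
Import S_HB.

Module S_T1.
Local Open Scope classical_set_scope.
Local Open Scope ring_scope.
Lemma exp_small (R : realType) (r e : R) : 0 <= r -> r < 1 -> 0 < e -> exists n : nat, r ^+ n < e.
Proof.
move=> r0 r1 e0.
have := @cvgr0_norm_lt _ _ _ _ eventually_filter _ (cvg_expr (z:=r) _) e e0.
rewrite ger0_norm // => /(_ r1) [N _ HN].
exists N; have := HN N (leqnn N) => /=; rewrite ger0_norm //; exact: exprn_ge0.
Qed.

End S_T1.
Import S_T1.

Module S_Main1.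
Set Implicit Arguments. Unset Strict Implicit. Unset Printing Implicit Defensive.
Local Open Scope classical_set_scope.
Local Open Scope ring_scope.

Section Main1.
Variables (R : realType) (X : normedModType R) (I : Type) (Y : I -> set X).
Hypothesis hY : forall i, lin_subspace (Y i).
Variable P : I -> (X -> R) -> (X -> R).
Hypothesis Pdual : forall i f, dual setT f -> dual setT (P i f).
Hypothesis Plin : forall i (a : R) f g, dual setT f -> dual setT g ->
  P i (fun x => a * f x + g x) = (fun x => a * P i f x + P i g x).
Hypothesis Pidem : forall i f, dual setT f -> P i (P i f) = P i f.
Hypothesis Pker : forall i f, dual setT f -> (P i f = (fun=> 0) <-> annih (Y i) f).
Hypothesis Pnorm : forall i f, dual setT f -> dnorm setT (P i f) <= dnorm setT f.
Hypothesis dense : closure (\bigcup_(i in setT) Y i) = setT.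
Variables (eps delta : R).
Hypothesis eps0 : 0 < eps.
Hypothesis delta0 : 0 < delta.
Hypothesis Hdelta : forall i f, dual setT f -> dnorm setT f = 1 ->
  dnorm setT (fun x => f x + P i f x) > 2 - delta ->
  dnorm setT (fun x => f x - P i f x) < eps / 4.

Definition eta := Num.min (delta / 2) (1 / 2).
Lemma eta0 : 0 < eta.
Proof. by rewrite /eta lt_min; apply/andP; split; rewrite divr_gt0. Qed.
Lemma eta_d : eta <= delta / 2. Proof. by rewrite /eta ge_min lexx. Qed.
Lemma eta_h : eta <= 1 / 2. Proof. by rewrite /eta ge_min lexx orbT. Qed.
Lemma eta_h2 : eta * 2 <= 1. Proof. by have := eta_h; rewrite ler_pdivlMr. Qed.
Lemma eta_d2 : eta * 2 <= delta. Proof. by have := eta_d; rewrite ler_pdivlMr. Qed.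

Lemma lin_setT : lin_subspace (setT : set X).
Proof. by []. Qed.
Hint Resolve lin_setT : core.

Lemma P0 i : P i (fun=> 0) = (fun=> 0).
Proof. by apply/(Pker i (dual0 _)); split; [exact: dual0|]. Qed.

Lemma Psub i f g : dual setT f -> dual setT g ->
  P i (fun x => f x - g x) = (fun x => P i f x - P i g x).
Proof.
move=> df dg; have := Plin i (-1) dg df.
have -> : (fun x => -1 * g x + f x) = (fun x => f x - g x).
  by apply: funext => x; rewrite mulN1r addrC.
move=> ->; apply: funext => x; by rewrite mulN1r addrC.
Qed.

Lemma Pscale i a f : dual setT f -> P i (fun x => a * f x) = (fun x => a * P i f x).
Proof.
move=> df; have := Plin i a df (dual0 _); rewrite P0.
have -> : (fun x => a * f x + 0) = (fun x => a * f x) by apply: funext => x; rewrite addr0.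
move=> ->; apply: funext => x; by rewrite addr0.
Qed.

Lemma PY i f y : dual setT f -> Y i y -> P i f y = f y.
Proof.
move=> df Yy.
have dh : dual setT (fun x => f x - P i f x) by apply: dual_sub => //; apply: Pdual.
have : P i (fun x => f x - P i f x) = fun=> 0.
  rewrite Psub //; last exact: Pdual.
  by rewrite Pidem //; apply: funext => x; rewrite subrr.
move/(Pker i dh) => [_ /(_ y Yy)] /eqP; rewrite subr_eq0 => /eqP.
done.
Qed.

Lemma P_restr i chi : dual setT chi ->
  dnorm setT (P i chi) <= dnorm (Y i) (restr (Y i) chi).
Proof.
move=> dchi; have lY := hY i; have Y0 := proj1 lY.
set M := dnorm (Y i) (restr (Y i) chi).
have drc := dual_restr lY dchi.
have M0 : 0 <= M by apply: dnorm_ge0.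
have lg : linZ (Y i) chi.
  by move=> a x y _ _; case: dchi => _ [l _]; apply: l.
have bg : forall y, Y i y -> `|chi y| <= M * `|y|.
  by move=> y Yy; rewrite -(restrE chi Yy); apply: dnorm_mul.
have [w [lw [wE wb]]] := hahn_banach lY M0 lg bg.
have dw : dual setT w.
  split; first by move=> x /(_ Logic.I).
  split; first by move=> a x y _ _; apply: lw.
  by exists M => x _; apply: wb.
have e : P i chi = P i w.
  have dd : dual setT (fun x => chi x - w x) by apply: dual_sub.
  have : P i (fun x => chi x - w x) = fun=> 0.
    apply/(Pker i dd); split => // y Yy; by rewrite wE // subrr.
  rewrite Psub // => H; apply: funext => x.
  by have /eqP := congr1 (fun h => h x) H; rewrite subr_eq0 => /eqP.
rewrite e; apply: le_trans (Pnorm i dw) _.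
by apply: dnorm_le => // x _ x1; apply: le_trans (wb x) _; rewrite -[leRHS]mulr1; apply: ler_wpM2l.
Qed.

Definition Rc i c (psi : X -> R) : X -> R := fun x => c^-1 * restr (Y i) psi x.

Lemma Rc_dual i c psi : dual setT psi -> dual (Y i) (Rc i c psi).
Proof. by move=> d; apply: dual_scale => //; apply: dual_restr. Qed.

Lemma Rc_norm i c psi : 0 < c -> dual setT psi ->
  dnorm (Y i) (Rc i c psi) = c^-1 * dnorm (Y i) (restr (Y i) psi).
Proof.
move=> c0 d; rewrite /Rc dnorm_scale //; last exact: dual_restr.
by rewrite ger0_norm // invr_ge0 ltW.
Qed.

Lemma Rc_ball i c psi : 0 < c -> dual setT psi -> dnorm setT psi <= c ->
  dball (Y i) (Rc i c psi).
Proof.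
move=> c0 d n; split; first exact: Rc_dual.
rewrite Rc_norm // -(@ler_pM2l _ c) // mulrA mulfV ?gt_eqF // mul1r mulr1.
apply: le_trans n; exact: dnorm_restr.
Qed.

Lemma Rc_sub i c f g : (fun x => Rc i c f x - Rc i c g x) = Rc i c (fun x => f x - g x).
Proof.
apply: funext => x; rewrite /Rc /restr; case: asboolP => _; last by rewrite mulr0 subr0.
by rewrite mulrBr.
Qed.

Lemma close i x0 c psi : Y i x0 -> `|x0| <= 1 -> 0 < c -> c <= 1 ->
  dual setT psi -> dnorm setT psi <= c -> psi x0 > c * (1 - eta) ->
  dnorm setT (fun x => psi x - P i psi x) <= eps / 4.
Proof.
move=> Yx0 x01 c0 c1 dpsi npsi px0.
have e0 := eta0; have eh := eta_h2; have ed := eta_d2.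
set n := dnorm setT psi in npsi *.
have nx0 : psi x0 <= n.
  apply: le_trans (ler_norm _) _; exact: dnorm_ge.
have th0 : 0 < c * (1 - eta) by apply: mulr_gt0 => //; lra.
have n0 : 0 < n by lra.
pose psi' := fun x => n^-1 * psi x.
have dpsi' : dual setT psi' by apply: dual_scale.
have npsi' : dnorm setT psi' = 1.
  by rewrite /psi' dnorm_scale // ger0_norm ?invr_ge0 ?ltW // mulVf ?gt_eqF.
have Ppsi' : P i psi' = fun x => n^-1 * P i psi x by apply: Pscale.
have big : dnorm setT (fun x => psi' x + P i psi' x) > 2 - delta.
  have dsum : dual setT (fun x => psi' x + P i psi' x) by apply: dual_add => //; apply: Pdual.
  have := dnorm_ge (x := x0) Logic.I dsum Logic.I x01.
  rewrite Ppsi' /= (PY dpsi Yx0) /psi'.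
  move=> H; apply: lt_le_trans H.
  have q : (1 - eta) < n^-1 * psi x0.
    rewrite -(@ltr_pM2l _ n) // mulrA mulfV ?gt_eqF // mul1r.
    apply: le_lt_trans px0; apply: ler_wpM2r; lra.
  apply: lt_le_trans (ler_norm _); lra.
have H := Hdelta dpsi' npsi' big.
have e1 : (fun x => psi' x - P i psi' x) = fun x => n^-1 * (psi x - P i psi x).
  by apply: funext => x; rewrite Ppsi' /psi' mulrBr.
have dd : dual setT (fun x => psi x - P i psi x) by apply: dual_sub => //; apply: Pdual.
rewrite e1 (dnorm_scale _ _ dd) // in H.
rewrite ger0_norm in H; last by rewrite invr_ge0 ltW.
set D := dnorm setT (fun x => psi x - P i psi x) in H *.
have H2 : D < n * (eps / 4).
  have -> : D = n * (n^-1 * D) by rewrite mulrA mulfV ?gt_eqF // mul1r.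
  by rewrite ltr_pM2l.
apply: ltW; apply: lt_le_trans H2 _; rewrite -[leRHS]mul1r.
apply: ler_wpM2r; [by rewrite divr_ge0 // ltW|lra].
Qed.

Lemma onestep i x0 c (KX KY : set (X -> R)) phi :
  Y i x0 -> `|x0| <= 1 -> 0 < c -> c <= 1 ->
  bnd setT c KX -> bnd (Y i) 1 KY ->
  (forall psi, KX psi -> psi x0 > c * (1 - eta) -> KY (Rc i c psi)) ->
  szlenk_deriv setT eps KX phi -> phi x0 > c * (1 - eta) ->
  szlenk_deriv (Y i) (eps / 2) KY (Rc i c phi).
Proof.
move=> Yx0 x01 c0 c1 bX bY hXY [KXphi Hphi] px0.
have lY := hY i; have Y0 := proj1 lY.
split; first exact: hXY.
move=> W [xs [d [d0 [xsY sub]]]].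
set th := c * (1 - eta) in px0 hXY *.
pose d' := Num.min (c * d) (phi x0 - th).
have d'0 : 0 < d' by rewrite lt_min mulr_gt0 // subr_gt0 px0.
have d'1 : d' <= c * d by rewrite ge_min lexx.
have d'2 : d' <= phi x0 - th by rewrite ge_min lexx orbT.
pose V := fun f : X -> R => dual setT f /\ forall x, x \in x0 :: xs -> `|f x - phi x| < d'.
have HV : wstar_nbhd setT phi V by exists (x0 :: xs), d'; split => //; split => // f.
have := Hphi V HV.
have bV : bnd setT c (V `&` KX) by move=> f [_ /bX].
rewrite (ddiam_gt Logic.I bV (ltW eps0)).
move=> [p1 [p2 [[Vp1 Kp1] [[Vp2 Kp2] big]]]].
have good : forall p, V p -> KX p -> th < p x0 /\ W (Rc i c p).
  move=> p [dp Hp] Kp; have := Hp x0 (mem_head _ _); rewrite ltr_norml => /andP [h1 h2].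
  split; first lra.
  apply: sub; split; first exact: Rc_dual.
  move=> x xin; have Yx := xsY x xin.
  rewrite /Rc !restrE // -mulrBr normrM ger0_norm ?invr_ge0 ?ltW //.
  have := Hp x; rewrite in_cons xin orbT => /(_ isT) hx.
  rewrite -(@ltr_pM2l _ c) // mulrA mulfV ?gt_eqF // mul1r.
  exact: lt_le_trans hx d'1.
have [th1 W1] := good _ Vp1 Kp1.
have [th2 W2] := good _ Vp2 Kp2.
have bW : bnd (Y i) 1 (W `&` KY) by move=> f [_ /bY].
rewrite (ddiam_gt Y0 bW); last by rewrite divr_ge0 // ltW.
exists (Rc i c p1), (Rc i c p2); split; first by split => //; apply: hXY.
split; first by split => //; apply: hXY.
have [dp1 np1] := bX _ Kp1; have [dp2 np2] := bX _ Kp2.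
have dd : dual setT (fun x => p1 x - p2 x) by apply: dual_sub.
rewrite Rc_sub Rc_norm //.
have n1 := close Yx0 x01 c0 c1 dp1 np1 th1.
have n2 := close Yx0 x01 c0 c1 dp2 np2 th2.
have hP := P_restr i dd.
rewrite Psub // in hP.
have dP1 := Pdual i dp1; have dP2 := Pdual i dp2.
have tri : dnorm setT (fun x => p1 x - p2 x) <= dnorm setT (fun x => p1 x - P i p1 x) +
    dnorm setT (fun x => p2 x - P i p2 x) + dnorm setT (fun x => P i p1 x - P i p2 x).
  apply: dnorm_le => // x _ x1.
  have e : p1 x - p2 x = (p1 x - P i p1 x) - (p2 x - P i p2 x) + (P i p1 x - P i p2 x) by ring.
  have g1 := dnorm_ge (f := fun x => p1 x - P i p1 x) (x := x) Logic.I (dual_sub lin_setT dp1 dP1) Logic.I x1.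
  have g2 := dnorm_ge (f := fun x => p2 x - P i p2 x) (x := x) Logic.I (dual_sub lin_setT dp2 dP2) Logic.I x1.
  have g3 := dnorm_ge (f := fun x => P i p1 x - P i p2 x) (x := x) Logic.I (dual_sub lin_setT dP1 dP2) Logic.I x1.
  rewrite /= in g1 g2 g3.
  rewrite e; apply: le_trans (ler_normD _ _) _.
  apply: le_trans (lerD (ler_normB _ _) (lexx _)) _; lra.
set r := dnorm (Y i) (restr (Y i) (fun x => p1 x - p2 x)) in hP *.
have r0 : 0 <= r by apply: dnorm_ge0 => //; apply: dual_restr.
have rr : r <= c^-1 * r.
  rewrite -[leLHS]mul1r; apply: ler_wpM2r => //; by rewrite invf_ge1.
have h2 : eps / 2 = eps / 4 * 2 by field.
have h4 : eps = eps / 4 * 4 by field.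
rewrite h2; lra.
Qed.

Lemma dens c phi : 0 < c -> dual setT phi -> dnorm setT phi <= c ->
  c * (1 - eta / 2) < dnorm setT phi ->
  exists i x0, Y i x0 /\ `|x0| <= 1 /\ c * (1 - eta) < phi x0.
Proof.
move=> c0 dphi nphi H.
have e0 := eta0; have eh := eta_h2.
have [x [_ [x1 hx]]] := dnorm_gt Logic.I H.
have [x' [x'1 hx']] : exists x', `|x'| <= 1 /\ c * (1 - eta / 2) < phi x'.
  have [p0|p0] := lerP 0 (phi x).
    by exists x; split => //; rewrite -(ger0_norm p0).
  exists (- x); split; first by rewrite normrN.
  have -> : - x = (-1) *: x by rewrite scaleN1r.
  rewrite (dual_scale_pt (-1) lin_setT dphi Logic.I) mulN1r.
  by rewrite -(ltr0_norm p0).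
pose rho := eta / 8.
have rho0 : 0 < rho by rewrite divr_gt0.
have : closure (\bigcup_(i in setT) Y i) x' by rewrite dense.
move=> /(_ _ (nbhsx_ballx x' rho rho0)) [y [[i _ Yy] bxy]].
have bxy' : `|x' - y| < rho by move: bxy; rewrite -ball_normE /ball_ /=.
have ny : `|y| <= `|x'| + `|x' - y|.
  by have := ler_normB x' (x' - y); rewrite opprB addrC subrK.
have py : phi x' - phi y <= c * rho.
  have e : phi x' - phi y = phi (x' - y).
    have [_ [l _]] := dphi; have := l (-1) y x' Logic.I Logic.I.
    rewrite scaleN1r mulN1r => Hl; by rewrite [x' - y]addrC Hl addrC.
  rewrite e; apply: le_trans (ler_norm _) _.
  apply: le_trans (dnorm_mul lin_setT dphi Logic.I) _.
  apply: (@le_trans _ _ (c * `|x' - y|)); first by apply: ler_wpM2r.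
  by apply: ler_wpM2l; [apply: ltW|apply: ltW].
have rho1 : 0 < 1 + rho by lra.
exists i, ((1 + rho)^-1 *: y); split; first exact: lin_scale.
split.
  rewrite normrZ ger0_norm; last by rewrite invr_ge0 ltW.
  rewrite ler_pdivrMl // mulr1; lra.
rewrite (dual_scale_pt (1 + rho)^-1 lin_setT dphi Logic.I).
rewrite ltr_pdivlMl //.
have key : c * (1 - eta / 2) - c * rho - (1 + rho) * (c * (1 - eta)) = c * (eta / 4 + eta * eta / 8).
  by rewrite /rho; field.
have k0 : 0 <= c * (eta / 4 + eta * eta / 8).
  by apply: mulr_ge0; [apply: ltW|apply: addr_ge0; apply: divr_ge0 => //; [apply: ltW|apply: mulr_ge0; apply: ltW]].
lra.
Qed.

Section Iterate.
Variables (A : Type) (ltA : A -> A -> Prop).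
Hypothesis wo : is_wellorder ltA.
Hypothesis SzY : forall i, Sz_le (Y i) (omega_pow_lt ltA).
Variable D : omega_pow (option A) -> set (X -> R).
Hypothesis HD : szlenk_iteration setT eps (dball setT) (omega_pow_lt (succ_lt ltA)) D.

Let wo' := olt_wo (succ_wo wo).
Let woT := olt_wo wo.
Let z := ozero A.

Lemma Ddecr t u : omega_pow_lt (succ_lt ltA) u t -> D t `<=` D u.
Proof. by move=> h; apply: (iter_decr wo' HD h). Qed.

Lemma D0 : D (jj 0 z) = dball setT.
Proof. by have [H1 _] := HD (jj 0 z); apply: H1 => u; apply: jzero_min. Qed.

Lemma Dball t : D t `<=` dball setT.
Proof.
have [e|[h|h]] := olt_tri (succ_wo wo) t (jj 0 z).
- by rewrite e D0.
- by case: (jzero_min h).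
- by rewrite -D0; apply: Ddecr.
Qed.

Definition rr := 1 - eta / 2.

Lemma rr_facts : 0 < rr /\ rr < 1.
Proof.
have e0 := eta0; have eh := eta_h2.
have h : eta / 2 * 2 = eta by field.
rewrite /rr; split; lra.
Qed.

Definition Hn (n : nat) := forall phi, D (jj n z) phi -> dnorm setT phi <= rr ^+ n.

Lemma Dseg n : Hn n -> forall t, bnd setT (rr ^+ n) (D (jj n t)).
Proof.
move=> Hn0 t phi Dphi; split; first by case: (Dball Dphi).
apply: Hn0.
have [e|[h|h]] := olt_tri wo t z.
- by rewrite -e.
- by case: (olt_zero h).
- by apply: (Ddecr (t := jj n t)) => //; apply/O1.
Qed.

Lemma step n : Hn n -> Hn n.+1.
Proof.
move=> Hn0 phi Dphi.
have [rr0 rr1] := rr_facts.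
set c := rr ^+ n.
have c0 : 0 < c by apply: exprn_gt0.
have c1 : c <= 1 by apply: exprn_ile1; [apply: ltW|apply: ltW].
have [dphi _] := Dball Dphi.
have Dphin : D (jj n z) phi by apply: (Ddecr (jj_lt_next ltA n z)).
have nphi := Hn0 _ Dphin.
rewrite exprSr leNgt; apply/negP => big.
have [i [x0 [Yx0 [x01 px0]]]] := dens c0 dphi nphi big.
have lY := hY i; have Y0 := proj1 lY.
have e20 : 0 <= eps / 2 by rewrite divr_ge0 // ltW.
have bKY : bnd (Y i) 1 (dball (Y i)) by move=> f [].
have mono : forall A0 B, A0 `<=` B -> B `<=` dball (Y i) ->
    szlenk_deriv (Y i) (eps / 2) A0 `<=` szlenk_deriv (Y i) (eps / 2) B.
  by move=> A0 B AB BK; apply: (deriv_mono Y0 e20 bKY AB BK).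
set DY := gfpD (Y i) (eps / 2) (dball (Y i)) (omega_pow_lt ltA).
have iterY := gfpD_iter woT mono.
have topY := topF_top (Y i) (eps / 2) (dball (Y i)) woT z DY.
have e2p : 0 < eps / 2 by rewrite divr_gt0.
have disj := @SzY i (eps / 2) e2p _ _ iterY topY.
set th := c * (1 - eta) in px0.
pose G := fun t (chi : X -> R) => exists psi, D (jj n t) psi /\ th < psi x0 /\ chi = Rc i c psi.
have bG : forall t, bnd (Y i) 1 (G t).
  move=> t f [psi [Dpsi [_ ->]]]; have [dpsi npsi] := Dseg Hn0 Dpsi.
  by case: (Rc_ball i c0 dpsi npsi).
have GPhi : forall s, G s `<=` Phi (Y i) (eps / 2) (dball (Y i)) (omega_pow_lt ltA) G s.
  move=> s f [psi [Dpsi [tpsi ->]]].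
  have [dpsi npsi] := Dseg Hn0 Dpsi.
  split; first exact: Rc_ball.
  split.
    move=> u pu.
    have [_ [H2 _]] := HD (jj n s).
    rewrite (H2 _ (TP n pu)) in Dpsi.
    have OS := onestep Yx0 x01 c0 c1 (@Dseg n Hn0 u) (bG u).
    apply: OS => //.
    by move=> psi' Dpsi' tpsi'; exists psi'.
  move=> ex nop u us.
  have [ex' nop'] := TL n ex nop.
  have [_ [_ H3]] := HD (jj n s).
  rewrite (H3 ex' nop') in Dpsi.
  exists psi; split => //; apply: Dpsi; exact/O1.
have GD : forall t, G t `<=` DY t.
  by move=> t; apply: gfpD_coind.
have Gall : forall t, G t (Rc i c phi).
  move=> t; exists phi; split => //.
  exact: (Ddecr (jj_lt_next ltA n t)).
case: disj => [[t Dt]|F0].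
  by have h := GD t _ (Gall t); rewrite /DY Dt in h.
have : topF (Y i) (eps / 2) (omega_pow_lt ltA) DY (Rc i c phi).
  split.
    move=> m Hm.
    have [_ [H2 _]] := HD (jj n.+1 z).
    rewrite (H2 _ (TM wo n Hm)) in Dphi.
    have bDY : bnd (Y i) 1 (DY m) by move=> f hf; apply: bKY; exact: (gfpD_K hf).
    apply: (onestep Yx0 x01 c0 c1 (@Dseg n Hn0 m) bDY) => //.
    by move=> psi' Dpsi' tpsi'; apply: GD; exists psi'.
  by move=> _ t; apply: GD.
by rewrite F0.
Qed.

Lemma Hall n : Hn n.
Proof.
elim: n => [|n IH]; last exact: step.
by move=> phi; rewrite D0 => -[_ h]; rewrite expr0.
Qed.

Lemma final : exists t, D t = set0.
Proof.
have [rr0 rr1] := rr_facts.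
have e2p : 0 < eps / 2 by rewrite divr_gt0.
have [N hN] := @exp_small R rr (eps / 2) (ltW rr0) rr1 e2p.
have [t [lt_t mint]] := min_exists wo' (ex_intro (fun v => omega_pow_lt (succ_lt ltA) (jj N z) v) _ (jj_lt_next ltA N z)).
have pt : is_pred (omega_pow_lt (succ_lt ltA)) (jj N z) t.
  by split => // v [h1 h2]; apply: (mint v h2 h1).
exists t; apply/seteqP; split => // phi.
have [_ [H2 _]] := HD t; rewrite (H2 _ pt) => -[_ H].
pose V := fun f : X -> R => dual setT f /\ forall x, x \in [::] -> `|f x - phi x| < 1.
have HV : wstar_nbhd setT phi V by exists [::], 1; split => //; split => // f.
have := H V HV.
have bV : bnd setT (rr ^+ N) (V `&` D (jj N z)) by move=> f [_ /(@Dseg N (@Hall N) z)].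
rewrite (ddiam_gt Logic.I bV (ltW eps0)) => -[p1 [p2 [[_ D1] [[_ D2] big]]]].
have [dp1 n1] := Dseg (@Hall N) D1; have [dp2 n2] := Dseg (@Hall N) D2.
have := dnorm_sub_le Logic.I dp1 dp2.
have h2 : eps = eps / 2 * 2 by field.
lra.
Qed.

End Iterate.

End Main1.

End S_Main1.
Import S_Main1.

Local Open Scope classical_set_scope.
Local Open Scope ring_scope.

Theorem lemma3p11 (R : realType) (X : completeNormedModType R)
  (I : Type) (Y : I -> set X)
  (A : Type) (ltA : A -> A -> Prop) :
  is_wellorder ltA ->
  (forall i, lin_subspace (Y i) /\ closed (Y i)) ->
  star_condition Y ->
  (forall i, Sz_le (Y i) (omega_pow_lt ltA)) ->
  closure (\bigcup_(i in setT) Y i) = setT ->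
  Sz_le (setT : set X) (omega_pow_lt (succ_lt ltA)).
Proof.
move=> wo hY star SzY dense eps eps0.
case: star => P [Pdual [Plin [Pidem [Pker [Pnorm Pstar]]]]].
have e4 : 0 < eps / 4 by rewrite divr_gt0.
have [delta [delta0 Hdelta]] := Pstar _ e4.
move=> D F HD HF; left.
exact: (final (fun i => proj1 (hY i)) Pdual Plin Pidem Pker Pnorm dense eps0 delta0 Hdelta wo SzY HD).
Qed.
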